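(* For every $n\ge0$ there are numbers $C_n^A$, indexed by the subsets $A\subseteq\{a_1,\dots,a_k\}$, with $0<C_n^A<1$ for all $A$ and $\sum_A C_n^A=1$, such that for all $x,y$ $$L_n(x,y)=\sum_{A\subseteq\{a_1,\dots,a_k\}} C_n^A\Big[\prod_{a_i\in A}(x-a_i)(y-a_i)\Big]K^A_{n-|A|}(x,y),$$ where $|A|$ is the cardinality of $A$ and $K_m^A\equiv0$ for $m<0$.
   Context: Let $\mu$ be a positive Borel measure on $\mathbb R$ with infinitely many points of increase and all moments finite. Let $a_1,\dots,a_k\in\mathbb R$ be distinct with $\mu(\{a_i\})=0$, $M_i>0$, $\nu=\mu+\sum_{i=1}^kM_i\delta_{a_i}$. $L_n(x,y)=\sum_{j=0}^nP_j(x)P_j(y)$ where $(P_j)$ are the orthonormal polynomials (positive leading coefficients) for $\nu$. For $A\subseteq\{a_1,\dots,a_k\}$, $d\mu^A(x)=\prod_{a_i\in A}(x-a_i)^2\,d\mu(x)$ (so $\mu^\emptyset=\mu$), and $K_m^A(x,y)$ is the $m$-th kernel $\sum_{j=0}^m q_j(x)q_j(y)$ for the orthonormal polynomials $(q_j)$ of $\mu^A$. *)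

(* Defs.v *)
From HB Require Import structures.
From mathcomp Require Import all_boot all_order all_algebra.
From mathcomp Require Import all_classical all_reals all_analysis.
Set Implicit Arguments. Unset Strict Implicit. Unset Printing Implicit Defensive.
Import Order.TTheory GRing.Theory Num.Theory.
Import numFieldNormedType.Exports.
Local Open Scope classical_set_scope.
Local Open Scope ring_scope.

Section Defs.
Variable R : realType.
Notation RT := (measurableTypeR R).

Definition point_of_increase (mu : {measure set RT -> \bar R}) (x : R) : Prop :=
  forall e : R, 0 < e ->
    let I : set RT := `](x - e), (x + e)[%classic in (0 < mu I)%E.

Definition infinitely_many_points_of_increase (mu : {measure set RT -> \bar R}) : Prop :=
  ~ finite_set [set x : R | point_of_increase mu x].

Definition finite_moments (mu : {measure set RT -> \bar R}) : Prop :=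
  forall j : nat, mu.-integrable [set: RT] (fun x : RT => ((x : R) ^+ j)%:E).

Definition nu_meas_seq k (mu : {measure set RT -> \bar R}) (a : 'I_k -> R)
    (M : 'I_k -> {posnum R}) : {measure set RT -> \bar R}^nat :=
  fun j => if j is j'.+1 then
             match (insub j' : option 'I_k) with
             | Some i => mscale ((M i)%:num%:nng) (@dirac _ RT (a i) R)
             | None => @mzero _ RT R
             end
           else mu.

(* nu_meas = mu + \sum_{i<k} M_i delta_{a_i} *)
Definition nu_meas k (mu : {measure set RT -> \bar R}) (a : 'I_k -> R)
    (M : 'I_k -> {posnum R}) : {measure set RT -> \bar R} :=
  msum (nu_meas_seq mu a M) k.+1.

Definition poly_ip (m : {measure set RT -> \bar R}) (p q : {poly R}) : R :=
  Rintegral m [set: RT] (fun x : RT => p.[x] * q.[x]).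

Definition weightA k (a : 'I_k -> R) (A : {set 'I_k}) (x : R) : R :=
  \prod_(i in A) (x - a i) ^+ 2.

(* inner product w.r.t. d mu^A = prod_{i in A}(x-a_i)^2 d mu *)
Definition poly_ip_A k (mu : {measure set RT -> \bar R}) (a : 'I_k -> R)
    (A : {set 'I_k}) (p q : {poly R}) : R :=
  Rintegral mu [set: RT] (fun x : RT => weightA a A x * (p.[x] * q.[x])).

Definition orthonormal_polys (ip : {poly R} -> {poly R} -> R) (P : nat -> {poly R}) : Prop :=
  forall i j : nat,
    size (P i) = i.+1 /\ 0 < lead_coef (P i) /\ ip (P i) (P j) = (i == j)%:R.

Definition ker_poly (P : nat -> {poly R}) (m : nat) (x y : R) : R :=
  \sum_(j < m.+1) (P j).[x] * (P j).[y].

Definition kernel_shift (P : nat -> {poly R}) (n d : nat) (x y : R) : R :=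
  if (d <= n)%N then ker_poly P (n - d) x y else 0.

End Defs.

(* Main.v *)
Require Import Defs.
From HB Require Import structures.
From mathcomp Require Import all_boot all_order all_algebra.
From mathcomp Require Import all_classical all_reals all_analysis.
From mathcomp Require Import measurable_realfun lebesgue_integral.
From mathcomp Require Import ring lra.
Import Order.TTheory GRing.Theory Num.Theory.
Import numFieldNormedType.Exports.
Set Implicit Arguments. Unset Strict Implicit.
Local Open Scope ring_scope.

Section Alg.
Variable R : realType.

Definition kerp (Q : nat -> {poly R}) (s : nat) (x : R) : {poly R} :=
  \sum_(j < s) (Q j).[x] *: Q j.

Lemma kerp_eval Q s x y : (kerp Q s x).[y] = \sum_(j < s) (Q j).[x] * (Q j).[y].
Proof. by rewrite /kerp horner_sum; apply: eq_bigr => j _; rewrite hornerZ. Qed.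

Lemma kerp_sym Q s x y : (kerp Q s x).[y] = (kerp Q s y).[x].
Proof. by rewrite !kerp_eval; apply: eq_bigr => j _; rewrite mulrC. Qed.

Section Form.
Variable F : {poly R} -> {poly R} -> R.
Hypothesis Fsym : forall p q, F p q = F q p.
Hypothesis Flin : forall p c u v, F p (c *: u + v) = c * F p u + F p v.

Lemma F0r p : F p 0 = 0.
Proof. by move: (Flin p (-1) 0 0); rewrite scaler0 addr0 mulN1r addNr. Qed.

Lemma FDr p u v : F p (u + v) = F p u + F p v.
Proof. by move: (Flin p 1 u v); rewrite scale1r mul1r. Qed.

Lemma FZr p c u : F p (c *: u) = c * F p u.
Proof. by rewrite -[c *: u]addr0 Flin F0r addr0. Qed.

Lemma FNr p u : F p (- u) = - F p u.
Proof. by rewrite -scaleN1r FZr mulN1r. Qed.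

Lemma FBr p u v : F p (u - v) = F p u - F p v.
Proof. by rewrite FDr FNr. Qed.

Lemma FDl p u v : F (u + v) p = F u p + F v p.
Proof. by rewrite Fsym FDr !(Fsym p). Qed.

Lemma FZl p c u : F (c *: u) p = c * F u p.
Proof. by rewrite Fsym FZr (Fsym p). Qed.

Lemma Fsumr p (I : Type) (r : seq I) (P : pred I) (G : I -> {poly R}) :
  F p (\sum_(i <- r | P i) G i) = \sum_(i <- r | P i) F p (G i).
Proof. exact: (big_morph (F p) (FDr p) (F0r p)). Qed.

Lemma Fsuml p (I : Type) (r : seq I) (P : pred I) (G : I -> {poly R}) :
  F (\sum_(i <- r | P i) G i) p = \sum_(i <- r | P i) F (G i) p.
Proof. by rewrite Fsym Fsumr; apply: eq_bigr => i _; rewrite Fsym. Qed.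

Variable Q : nat -> {poly R}.
Hypothesis hQ : orthonormal_polys F Q.

Lemma expand s (p : {poly R}) : (size p <= s)%N -> p = \sum_(j < s) F (Q j) p *: Q j.
Proof.
elim: s p => [|s IH] p hp.
  by rewrite big_ord0; apply/eqP; rewrite -size_poly_eq0 -leqn0.
have [sQ [lQ _]] := hQ s s.
have lc : lead_coef (Q s) = (Q s)`_s by rewrite /lead_coef sQ.
have hl : lead_coef (Q s) != 0 by rewrite gt_eqF.
set c := p`_s / lead_coef (Q s).
set p' := p - c *: Q s.
have hs : (size p' <= s)%N.
  apply/leq_sizeP => j hj.
  rewrite leq_eqVlt in hj; case/orP: hj => [/eqP <-|hj].
    by rewrite coefB coefZ -lc /c divfK // subrr.
  have : (size p' <= s.+1)%N.
    rewrite /p' (leq_trans (size_add _ _)) // geq_max hp size_opp.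
    by rewrite (leq_trans (size_scale_leq _ _)) // sQ.
  by move/leq_sizeP; apply.
have FQj : forall j : 'I_s, F (Q j) p' = F (Q j) p.
  move=> j; rewrite /p' FBr FZr.
  have [_ [_ ->]] := hQ j s.
  by rewrite ltn_eqF ?ltn_ord // mulr0 subr0.
have FQs : F (Q s) p = c.
  have -> : p = p' + c *: Q s by rewrite /p' subrK.
  rewrite FDr FZr (IH p' hs) Fsumr big1 ?add0r.
    by have [_ [_ ->]] := hQ s s; rewrite eqxx mulr1.
  move=> j _; rewrite FZr.
  have [_ [_ ->]] := hQ s j.
  by rewrite gtn_eqF ?ltn_ord // mulr0.
transitivity (p' + c *: Q s); first by rewrite /p' subrK.
rewrite big_ord_recr /= FQs; congr (_ + _).
rewrite {1}(IH p' hs); apply: eq_bigr => j _; by rewrite FQj.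
Qed.

Lemma kerp_size s x : (size (kerp Q s x) <= s)%N.
Proof.
rewrite /kerp; apply: (big_ind (fun p : {poly R} => (size p <= s)%N)).
- by rewrite size_poly0.
- by move=> u v hu hv; rewrite (leq_trans (size_add _ _)) // geq_max hu hv.
- move=> j _; rewrite (leq_trans (size_scale_leq _ _)) //.
  by have [-> _] := hQ j j.
Qed.

Lemma reproduce s x (p : {poly R}) : (size p <= s)%N -> F (kerp Q s x) p = p.[x].
Proof.
move=> hp; rewrite {2}(@expand _ _ hp) /kerp Fsuml horner_sum.
by apply: eq_bigr => j _; rewrite FZl hornerZ Fsym mulrC.
Qed.

Lemma kerp_unique s (x : R) (G : {poly R}) : (size G <= s)%N ->
  (forall p : {poly R}, (size p <= s)%N -> F G p = p.[x]) -> G = kerp Q s x.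
Proof.
move=> hG hrep; apply/eqP; rewrite -subr_eq0; apply/eqP.
have hd : (size (G - kerp Q s x)%R <= s)%N.
  by rewrite (leq_trans (size_add _ _)) // geq_max hG size_opp kerp_size.
rewrite (@expand _ _ hd) big1 // => j _.
have hj : (size (Q j) <= s)%N by have [-> _] := hQ j j.
by rewrite FBr !(Fsym (Q j)) hrep // reproduce // subrr scale0r.
Qed.

End Form.

Definition stepK (K1 K2 : R -> {poly R}) (b c x : R) : {poly R} :=
  c *: K1 x + ((1 - c) * (x - b)) *: (('X - b%:P) * K2 x).

Lemma step (F F' H : {poly R} -> {poly R} -> R) (b m c : R)
    (K1 K2 : R -> {poly R}) (s' : nat) :
  (forall p q, F p q = F q p) ->
  (forall p c u v, F p (c *: u + v) = c * F p u + F p v) ->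
  (forall p q, F' p q = F p q + m * p.[b] * q.[b]) ->
  (forall p q, H p q = F (('X - b%:P) * p) (('X - b%:P) * q)) ->
  (forall x, (size (K1 x) <= s'.+1)%N) ->
  (forall x (p : {poly R}), (size p <= s'.+1)%N -> F (K1 x) p = p.[x]) ->
  (forall x y, (K1 x).[y] = (K1 y).[x]) ->
  (forall x, (size (K2 x) <= s')%N) ->
  (forall x (r : {poly R}), (size r <= s')%N -> H (K2 x) r = r.[x]) ->
  (K1 b).[b] != 0 -> c * (1 + m * (K1 b).[b]) = 1 ->
  forall x, (size (stepK K1 K2 b c x) <= s'.+1)%N /\
    (forall p : {poly R}, (size p <= s'.+1)%N -> F' (stepK K1 K2 b c x) p = p.[x]).
Proof.
move=> Fsym Flin hF' hH sK1 rK1 symK1 sK2 rK2 kb0 hc x.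
have sXK : forall y, (size (('X - b%:P) * K2 y)%R <= s'.+1)%N.
  move=> y; rewrite (leq_trans (size_mul_leq _ _)) // size_XsubC.
  by have := sK2 y; case: (size (K2 y)).
split.
  rewrite /stepK (leq_trans (size_add _ _)) // geq_max.
  by rewrite !(leq_trans (size_scale_leq _ _)) ?sK1 ?sXK.
move=> p hp.
set kb := (K1 b).[b].
set al := p.[b] / kb.
have hroot : root (p - al *: K1 b) b.
  by rewrite rootE hornerD hornerN hornerZ /al divfK // subrr.
set r := (p - al *: K1 b) %/ ('X - b%:P).
have hpr : p = al *: K1 b + r * ('X - b%:P).
  by rewrite /r divpK ?dvdp_XsubCl // addrC subrK.
have hr : (size r <= s')%N.
  rewrite /r size_divp ?polyXsubC_eq0 // size_XsubC /= leq_subLR add1n.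
  rewrite (leq_trans (size_add _ _)) // geq_max hp size_opp.
  by rewrite (leq_trans (size_scale_leq _ _)) ?sK1.
have px : p.[x] = al * (K1 b).[x] + r.[x] * (x - b).
  by rewrite {1}hpr hornerD hornerZ hornerM hornerXsubC.
have pb : p.[b] = al * kb.
  by rewrite {1}hpr hornerD hornerZ hornerM hornerXsubC subrr mulr0 addr0.
have e2 : F (('X - b%:P) * K2 x) p = r.[x].
  rewrite {1}hpr (FDr Flin) (FZr Flin) Fsym rK1 ?sXK //.
  rewrite hornerM hornerXsubC subrr mul0r mulr0 add0r.
  by rewrite [r * _]mulrC -hH rK2.
have e1 : F (K1 x) p = p.[x] by rewrite rK1.
rewrite hF' /stepK (FDl Fsym Flin) !(FZl Fsym Flin) e1 e2.
rewrite hornerD !hornerZ hornerM hornerXsubC subrr mul0r mulr0 addr0.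
rewrite symK1 pb px.
have -> : c * (al * (K1 b).[x] + r.[x] * (x - b)) + (1 - c) * (x - b) * r.[x] +
   m * (c * (K1 b).[x]) * (al * kb) =
   al * (K1 b).[x] * (c * (1 + m * kb)) + r.[x] * (x - b) by ring.
by rewrite hc mulr1.
Qed.

End Alg.

Unset Implicit Arguments.
Section Meas.
Variable R : realType.
Notation RT := (measurableTypeR R).
Variable mu : {measure set RT -> \bar R}.
Hypothesis hmom : finite_moments mu.

Lemma poly_integrable (r : {poly R}) :
  mu.-integrable [set: RT] (EFin \o (fun x : RT => r.[x])).
Proof.
have -> : (EFin \o (fun x : RT => r.[x])) =
   (fun x : RT => \sum_(i < size r) ((r`_i)%:E * ((x : R) ^+ i)%:E))%E.
  by apply/funext => x /=; rewrite horner_coef -sumEFin; apply: eq_bigr => i _; rewrite EFinM.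
apply: (integrable_sum measurableT) => i _.
apply: integrableZl; [exact: measurableT | exact: hmom].
Qed.

Definition Lmu (r : {poly R}) : R := Rintegral mu [set: RT] (fun x : RT => r.[x]).

Lemma Lmu_lin c u v : Lmu (c *: u + v) = c * Lmu u + Lmu v.
Proof.
rewrite /Lmu.
under eq_Rintegral do rewrite hornerD hornerZ.
rewrite RintegralD //; last exact: poly_integrable.
  by rewrite RintegralZl //; exact: poly_integrable.
have -> : (EFin \o (fun x : RT => c * u.[x])) = (EFin \o (fun x : RT => (c *: u).[x])).
  by apply/funext => x /=; rewrite hornerZ.
exact: poly_integrable.
Qed.

Lemma max_sub (t : R) : Num.max t 0 - Num.max (- t) 0 = t.
Proof.
rewrite /Order.max; case: ltP => h1; case: ltP => h2; lra.
Qed.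

Variable k : nat.
Variable a : 'I_k -> R.
Variable M : 'I_k -> {posnum R}.

Lemma nu_ge0 (g : RT -> \bar R) : (forall x, 0 <= g x)%E -> measurable_fun [set: RT] g ->
  (\int[nu_meas mu a M]_(x in [set: RT]) g x =
   \int[mu]_(x in [set: RT]) g x + \sum_(i < k) ((M i)%:num)%:E * g (a i))%E.
Proof.
move=> g0 mg.
rewrite /nu_meas ge0_integral_measure_sum; try (by move=> x _; exact: g0); try exact: mg; try exact: measurableT.
rewrite big_ord_recl /=; congr (_ + _)%E.
apply: eq_bigr => i _.
rewrite add0n valK ge0_integral_mscale; try (by move=> x _; exact: g0); try exact: mg; try exact: measurableT.
by rewrite integral_dirac // diracT mul1e.
Qed.

Lemma nu_decomp (r : {poly R}) :
  Rintegral (nu_meas mu a M) [set: RT] (fun x : RT => r.[x]) =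
  Lmu r + \sum_(i < k) (M i)%:num * r.[a i].
Proof.
set f := (EFin \o (fun x : RT => r.[x])).
have mf : measurable_fun [set: RT] f.
  apply/measurable_EFinP; exact: measurable_poly.
have hint := poly_integrable r.
rewrite /Rintegral /Lmu /Rintegral -/f.
rewrite (integralE _ _ f) (integralE mu _ f).
rewrite !nu_ge0.
all: try (by move=> x; exact: funeneg_ge0).
all: try (by move=> x; exact: funepos_ge0).
all: try (by exact: measurable_funeneg).
all: try (by exact: measurable_funepos).
have h1 := integrable_fin_num measurableT (integrable_funepos measurableT hint).
have h2 := integrable_fin_num measurableT (integrable_funeneg measurableT hint).
rewrite -(fineK h1) -(fineK h2).
under eq_bigr do rewrite funeposE /f /= -EFin_max -EFinM.
under [X in (_ - (_ + X))%E]eq_bigr do rewrite funenegE /f /= -EFin_max -EFinM.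
rewrite !sumEFin -!EFinD /=.
set u := fine _; set v := fine _.
rewrite ?sumrN.
have -> : \sum_(i < k) (M i)%:num * r.[a i] = \sum_(i < k) ((M i)%:num * Num.max r.[a i] 0 + - ((M i)%:num * Num.max (- r.[a i]) 0)).
  by apply: eq_bigr => i _; rewrite -mulrN -mulrDr max_sub.
rewrite big_split /= sumrN.
lra.
Qed.

End Meas.

Lemma sumsplit (V : zmodType) (k : nat) (b : 'I_k) (f : {set 'I_k} -> V) :
  \sum_(A : {set 'I_k}) f A = \sum_(A : {set 'I_k} | b \notin A) f A + \sum_(A : {set 'I_k} | b \notin A) f (b |: A).
Proof.
rewrite (bigID (fun A : {set 'I_k} => b \in A)) /= addrC; congr (_ + _).
rewrite (reindex_onto (fun A : {set 'I_k} => b |: A) (fun A : {set 'I_k} => A :\ b)) /=; last first.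
  by move=> A hA; rewrite finset.setD1K.
apply: eq_bigl => A; rewrite setU11 /=.
case hbA: (b \in A) => /=.
  apply/negbTE/eqP => E.
  by move: hbA; rewrite -E setD11.
by rewrite setU1K ?hbA // eqxx.
Qed.

Section Main.
Variable R : realType.
Variable Lmu : {poly R} -> R.
Hypothesis Llin : forall c u v, Lmu (c *: u + v) = c * Lmu u + Lmu v.
Variable k : nat.
Variable a : 'I_k -> R.
Local Notation fs0 := (finset.set0 : {set 'I_k}).
Hypothesis ainj : injective a.
Variable M : 'I_k -> R.
Hypothesis Mpos : forall i, 0 < M i.
Implicit Types (S B A : {set 'I_k}) (b : 'I_k) (p q r u v : {poly R}).

Definition wP (B : {set 'I_k}) : {poly R} := \prod_(i in B) ('X - (a i)%:P) ^+ 2.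
Definition piP (B : {set 'I_k}) : {poly R} := \prod_(i in B) ('X - (a i)%:P).
Definition Lam (S : {set 'I_k}) (r : {poly R}) : R := Lmu r + \sum_(i in S) M i * r.[a i].
Definition FF S B (p q : {poly R}) : R := Lam S (wP B * (p * q)).

Lemma Lam_lin S c u v : Lam S (c *: u + v) = c * Lam S u + Lam S v.
Proof.
rewrite /Lam Llin mulrDr -addrA -addrA; congr (_ + _); rewrite addrCA; congr (_ + _).
rewrite mulr_sumr -big_split /=; apply: eq_bigr => i _.
rewrite hornerD hornerZ; ring.
Qed.

Lemma FF_sym S B p q : FF S B p q = FF S B q p.
Proof. by rewrite /FF [p * q]mulrC. Qed.

Lemma FF_lin S B p c u v : FF S B p (c *: u + v) = c * FF S B p u + FF S B p v.
Proof.
rewrite /FF -Lam_lin; congr (Lam S _).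
rewrite -!mul_polyC.
ring.
Qed.

Lemma Lam_split S b r : b \in S -> Lam S r = Lam (S :\ b) r + M b * r.[a b].
Proof.
move=> hb; rewrite /Lam (bigD1 b) //= -addrA; congr (_ + _); rewrite addrC; congr (_ + _).
by apply: eq_bigl => i; rewrite in_setD1 andbC.
Qed.

Lemma FF_split S B b p q : b \in S ->
  FF S B p q = FF (S :\ b) B p q + (M b * (wP B).[a b]) * p.[a b] * q.[a b].
Proof.
move=> hb; rewrite /FF (@Lam_split _ _ _ hb); congr (_ + _).
rewrite !hornerM; ring.
Qed.

Lemma wP_U1 B b : b \notin B -> wP (b |: B) = ('X - (a b)%:P) ^+ 2 * wP B.
Proof. by move=> hb; rewrite /wP big_setU1. Qed.

Lemma piP_U1 B b : b \notin B -> piP (b |: B) = ('X - (a b)%:P) * piP B.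
Proof. by move=> hb; rewrite /piP big_setU1. Qed.

Lemma FF_shift S B b p q : b \notin B ->
  FF S B (('X - (a b)%:P) * p) (('X - (a b)%:P) * q) = FF S (b |: B) p q.
Proof. by move=> hb; rewrite /FF wP_U1 //; congr (Lam S _); ring. Qed.

Lemma wP_pos B b : b \notin B -> 0 < (wP B).[a b].
Proof.
move=> hb; rewrite /wP horner_prod; apply: prodr_gt0 => i hi.
rewrite horner_exp hornerXsubC exprn_even_gt0 //=.
rewrite subr_eq0; apply/eqP => /ainj E.
by move: hb; rewrite E hi.
Qed.

Variable q : {set 'I_k} -> nat -> {poly R}.
Hypothesis hq : forall A, orthonormal_polys (FF fs0 A) (q A).

Definition Kc (B : {set 'I_k}) (C : {set 'I_k} -> R) (s : nat) (x : R) : {poly R} :=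
  \sum_(A : {set 'I_k}) (C A * (piP A).[x]) *: (piP A * kerp (q (A :|: B)) (s - #|A|) x).

Lemma Kc_eval B C s x y : (Kc B C s x).[y] =
  \sum_(A : {set 'I_k}) C A * ((piP A).[x] * (piP A).[y]) * (kerp (q (A :|: B)) (s - #|A|) x).[y].
Proof.
rewrite /Kc horner_sum; apply: eq_bigr => A _.
rewrite hornerZ hornerM; ring.
Qed.

Lemma Kc_sym B C s x y : (Kc B C s x).[y] = (Kc B C s y).[x].
Proof.
rewrite !Kc_eval; apply: eq_bigr => A _.
by rewrite kerp_sym [_.[x] * _]mulrC.
Qed.

Lemma Kc0 B C x : Kc B C 0 x = 0.
Proof.
rewrite /Kc big1 // => A _.
by rewrite sub0n /kerp big_ord0 mulr0 scaler0.
Qed.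


Lemma FFlin S B : forall p c u v, FF S B p (c *: u + v) = c * FF S B p u + FF S B p v.
Proof. exact: FF_lin. Qed.
Lemma FFsym S B : forall p q, FF S B p q = FF S B q p.
Proof. exact: FF_sym. Qed.

Lemma q0_pos A x : 0 < (q A 0).[x] * (q A 0).[x].
Proof.
have [s0 [l0 _]] := hq A 0 0.
rewrite (size1_polyC (eq_leq s0)) hornerC.
have -> : (q A 0)`_0 = lead_coef (q A 0) by rewrite /lead_coef s0.
by rewrite mulr_gt0.
Qed.

Lemma piP0 : piP fs0 = 1.
Proof. by rewrite /piP big_set0. Qed.

Lemma card0s : #|(fs0 : {set 'I_k})| = 0%N.
Proof. exact: cards0. Qed.

Lemma sq_ge0 (t : R) : 0 <= t * t.
Proof. by rewrite -expr2 sqr_ge0. Qed.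

Lemma Kc_pos B C s x : (forall A, 0 <= C A) -> 0 < C fs0 -> (0 < s)%N ->
  0 < (Kc B C s x).[x].
Proof.
move=> C0 Cs0 hs; rewrite Kc_eval (bigD1 fs0) //=.
have hfirst : 0 < C fs0 * ((piP fs0).[x] * (piP fs0).[x]) *
     (kerp (q (fs0 :|: B)) (s - #|fs0|) x).[x].
  rewrite piP0 hornerC mulr1 card0s subn0 kerp_eval.
  case: s hs => // s _; rewrite big_ord_recl mulr_gt0 //.
  by rewrite mulr1.
  apply: ltr_wpDr; first by apply: sumr_ge0 => j _; exact: sq_ge0.
  exact: q0_pos.
have hrest : 0 <= \sum_(A | A != fs0) C A * ((piP A).[x] * (piP A).[x]) *
     (kerp (q (A :|: B)) (s - #|A|) x).[x].
  apply: sumr_ge0 => A _; apply: mulr_ge0; first by apply: mulr_ge0; [exact: C0 | exact: sq_ge0].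
  by rewrite kerp_eval sumr_ge0 // => j _; exact: sq_ge0.
lra.
Qed.

Lemma Kc_step B C C1 C2 b c s' x : b \notin B ->
  (forall A, b \notin A -> C A = c * C1 A) ->
  (forall A, b \notin A -> C (b |: A) = (1 - c) * C2 A) ->
  (forall A, C1 (b |: A) = 0) -> (forall A, C2 (b |: A) = 0) ->
  Kc B C s'.+1 x = stepK (Kc B C1 s'.+1) (Kc (b |: B) C2 s') (a b) c x.
Proof.
move=> hbB hC1 hC2 hz1 hz2.
rewrite /stepK /Kc (@sumsplit _ _ b) [in RHS](@sumsplit _ _ b) [X in (_ - _%:P) * X](@sumsplit _ _ b).
rewrite [X in c *: (_ + X)]big1 ?addr0; last by move=> A _; rewrite hz1 mul0r scale0r.
rewrite [X in (_ - _%:P) * (_ + X)]big1 ?addr0; last by move=> A _; rewrite hz2 mul0r scale0r.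
rewrite scaler_sumr mulr_sumr scaler_sumr; congr (_ + _).
  by apply: eq_bigr => A hA; rewrite hC1 // scalerA mulrA.
apply: eq_bigr => A hA.
rewrite hC2 // piP_U1 // cardsU1 hA add1n subSS.
have -> : (b |: A) :|: B = A :|: (b |: B) by rewrite -finset.setUA finset.setUCA.
rewrite hornerM hornerXsubC -!mul_polyC !polyCM; ring.
Qed.

Definition Cunif S (A : {set 'I_k}) : R :=
  if A \subset S then (#|powerset S|%:R)^-1 else 0.

Lemma Cunif_props S :
  (forall A, A \subset S -> 0 < Cunif S A) /\ (forall A, ~~ (A \subset S) -> Cunif S A = 0) /\
  \sum_A Cunif S A = 1.
Proof.
have hN : 0 < (#|powerset S|%:R : R) by rewrite ltr0n card_powerset expn_gt0.
split; first by move=> A hA; rewrite /Cunif hA invr_gt0.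
split; first by move=> A hA; rewrite /Cunif (negbTE hA).
rewrite /Cunif -big_mkcond /=.
rewrite (eq_bigl (fun A => A \in powerset S)); last by move=> A; rewrite powersetE.
by rewrite sumr_const -[_ *+ _]mulr_natr mulVf // gt_eqF.
Qed.

Lemma claim n : forall S, #|S| = n -> forall B, (forall i, i \in S -> i \notin B) ->
  forall s, exists C : {set 'I_k} -> R,
  (forall A, A \subset S -> 0 < C A) /\ (forall A, ~~ (A \subset S) -> C A = 0) /\
  \sum_A C A = 1 /\
  forall x, (size (Kc B C s x) <= s)%N /\
    forall p, (size p <= s)%N -> FF S B (Kc B C s x) p = p.[x].
Proof.
elim: n => [|n IH] S hS B hdis s.
  have -> := cards0_eq hS.
  exists (fun A => (A == fs0)%:R).
  split; first by move=> A; rewrite finset.subset0 => /eqP ->; rewrite eqxx ltr01.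
  split; first by move=> A; rewrite finset.subset0 => /negbTE ->.
  split.
    by rewrite (bigD1 fs0) //= eqxx big1 ?addr0 // => A /negbTE ->.
  have hK : forall x, Kc B (fun A => (A == fs0)%:R) s x = kerp (q B) s x.
    move=> x; rewrite /Kc (bigD1 fs0) //= big1 ?addr0; last first.
      by move=> A /negbTE ->; rewrite mul0r scale0r.
    by rewrite eqxx /piP big_set0 hornerC mulr1 scale1r mul1r cards0 subn0 finset.set0U.
  move=> x; rewrite hK; split; first exact: (kerp_size (hq B)).
  by move=> p hp; rewrite (reproduce (FFsym _ _) (FFlin _ _) (hq B)).
have [b hb] : exists b, b \in S by apply/set0Pn; rewrite -card_gt0 hS.
set S' := S :\ b.
have hS' : #|S'| = n by move: hS; rewrite (cardsD1 b) hb add1n => -[].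
have hbB : b \notin B by exact: hdis.
have hbS' : b \notin S' by rewrite /S' setD11.
have hdis1 : forall i, i \in S' -> i \notin B.
  by move=> i; rewrite /S' in_setD1 => /andP [_ /hdis].
have hdis2 : forall i, i \in S' -> i \notin b |: B.
  move=> i; rewrite /S' in_setD1 => /andP [hib /hdis hiB].
  by rewrite in_setU1 negb_or hib.
case: s => [|s'].
  have [P1 [P2 P3]] := Cunif_props S.
  exists (Cunif S); split => //; split => //; split => // x.
  rewrite Kc0 size_poly0; split => // p.
  rewrite leqn0 size_poly_eq0 => /eqP ->.
  by rewrite hornerC (F0r (FFlin S B)).
have [C1 [C1p [C1z [C1s hK1]]]] := IH S' hS' B hdis1 s'.+1.
have [C2 [C2p [C2z [C2s hK2]]]] := IH S' hS' (b |: B) hdis2 s'.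
have hz : forall (C' : {set 'I_k} -> R), (forall A, ~~ (A \subset S') -> C' A = 0) ->
    forall A, C' (b |: A) = 0.
  move=> C' hC' A; apply: hC'; apply/negP => /fintype.subsetP /(_ b).
  by rewrite setU11 => /(_ isT); rewrite (negbTE hbS').
set m := M b * (wP B).[a b].
have hm : 0 < m by rewrite mulr_gt0 ?Mpos ?wP_pos.
have C1ge0 : forall A, 0 <= C1 A.
  by move=> A; case hA: (A \subset S'); [rewrite ltW ?C1p | rewrite C1z ?hA].
set kb := (Kc B C1 s'.+1 (a b)).[a b].
have hkb : 0 < kb by apply: Kc_pos => //; apply: C1p; exact: finset.sub0set.
set c := (1 + m * kb)^-1.
have hmk : 0 < m * kb by exact: mulr_gt0.
have hpos : 0 < 1 + m * kb by lra.
have hc : c * (1 + m * kb) = 1 by rewrite mulVf // gt_eqF.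
have c0 : 0 < c by rewrite invr_gt0.
have c1 : c < 1.
  by rewrite /c invf_lt1 //; lra.
exists (fun A => if b \in A then (1 - c) * C2 (A :\ b) else c * C1 A).
split.
  move=> A hA; case: ifP => hbA.
    rewrite mulr_gt0 ?subr_gt0 // C2p //.
    by rewrite /S' finset.setSD.
  rewrite mulr_gt0 // C1p //; apply/fintype.subsetP => i hi.
  rewrite /S' in_setD1 (fintype.subsetP hA) // andbT.
  by apply/eqP => E; move: hbA; rewrite -E hi.
split.
  move=> A hA; case: ifP => hbA.
    rewrite C2z ?mulr0 //; apply/negP => hsub; move/negP: hA; apply.
    rewrite -(finset.setD1K hbA); apply/fintype.subsetP => i; rewrite in_setU1 => /orP [/eqP -> //|].
    by move/(fintype.subsetP hsub); rewrite /S' in_setD1 => /andP [].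
  rewrite C1z ?mulr0 //; apply/negP => hsub; move/negP: hA; apply.
  by apply: (fintype.subset_trans hsub); rewrite /S' finset.subD1set.
split.
  rewrite (@sumsplit _ _ b).
  under eq_bigr => A hA do rewrite (negbTE hA).
  under [X in _ + X]eq_bigr => A hA do rewrite setU11 setU1K //.
  rewrite -!mulr_sumr.
  have e1 : \sum_(A : {set 'I_k} | b \notin A) C1 A = 1.
    by rewrite -C1s (@sumsplit _ _ b) [X in _ + X]big1 ?addr0 // => A _; rewrite hz.
  have e2 : \sum_(A : {set 'I_k} | b \notin A) C2 A = 1.
    by rewrite -C2s (@sumsplit _ _ b) [X in _ + X]big1 ?addr0 // => A _; rewrite hz.
  rewrite e1 e2; lra.
move=> x.
rewrite (@Kc_step B _ C1 C2 b c s' x hbB); first last.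
- exact: hz.
- exact: hz.
- by move=> A hA; rewrite setU11 setU1K.
- by move=> A hA; rewrite (negbTE hA).
have := @step R (FF S' B) (FF S B) (FF S' (b |: B)) (a b) m c
  (Kc B C1 s'.+1) (Kc (b |: B) C2 s') s' (FFsym _ _) (FFlin _ _).
apply.
- by move=> p1 p2; rewrite (@FF_split S B b p1 p2 hb).
- by move=> p1 p2; rewrite FF_shift.
- by move=> y; case: (hK1 y).
- by move=> y p hp; case: (hK1 y) => _; apply.
- exact: Kc_sym.
- by move=> y; case: (hK2 y).
- by move=> y r hr; case: (hK2 y) => _; apply.
- by rewrite gt_eqF.
- exact: hc.
Qed.

End Main.

Local Open Scope classical_set_scope.
Local Open Scope ring_scope.

Theorem mainTheorem4 (R : realType) (mu : {measure set (measurableTypeR R) -> \bar R})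
    (k : nat) (a : 'I_k -> R) (M : 'I_k -> {posnum R})
    (P : nat -> {poly R}) (q : {set 'I_k} -> nat -> {poly R}) :
  (0 < k)%N ->
  infinitely_many_points_of_increase mu ->
  finite_moments mu ->
  injective a ->
  (forall i : 'I_k, mu [set a i] = 0%E) ->
  orthonormal_polys (poly_ip (nu_meas mu a M)) P ->
  (forall A : {set 'I_k}, orthonormal_polys (poly_ip_A mu a A) (q A)) ->
  forall n : nat, exists C : {set 'I_k} -> R,
    (forall A : {set 'I_k}, 0 < C A < 1) /\
    \sum_(A : {set 'I_k}) C A = 1 /\
    (forall x y : R,
      ker_poly P n x y =
      \sum_(A : {set 'I_k})
         C A * (\prod_(i in A) ((x - a i) * (y - a i))) * kernel_shift (q A) n #|A| x y).
Proof.
move=> hk _ hmom ainj _ hP hqA n.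
pose Mr := fun i => (M i)%:num.
have Mpos : forall i, 0 < Mr i by move=> i; rewrite /Mr.
have Llin := @Lmu_lin R mu hmom.
have eA : forall A, poly_ip_A mu a A = @FF R (@Lmu R mu) k a Mr (finset.set0 : {set 'I_k}) A.
  move=> A; apply/funext => p1; apply/funext => p2.
  rewrite /FF /Lam big_set0 addr0 /Lmu /poly_ip_A.
  apply: eq_Rintegral => x _.
  rewrite !hornerM /wP horner_prod /weightA; congr (_ * _).
  by apply: eq_bigr => i _; rewrite horner_exp hornerXsubC.
have eN : poly_ip (nu_meas mu a M) = @FF R (@Lmu R mu) k a Mr [set: 'I_k]%SET (finset.set0 : {set 'I_k}).
  apply/funext => p1; apply/funext => p2.
  rewrite /FF /Lam /wP big_set0 mul1r /poly_ip.
  have -> : \sum_(i in [set: 'I_k]%SET) Mr i * (p1 * p2).[a i] = \sum_(i < k) (M i)%:num * (p1 * p2).[a i].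
    by apply: eq_bigl => i; rewrite finset.in_setT.
  rewrite -(@nu_decomp R mu hmom k a M (p1 * p2)).
  apply: eq_Rintegral => x _; by rewrite hornerM.
have hq : forall A, orthonormal_polys (@FF R (@Lmu R mu) k a Mr (finset.set0 : {set 'I_k}) A) (q A).
  by move=> A; rewrite -eA.
rewrite eN in hP.
have := @claim R (@Lmu R mu) Llin k a ainj Mr Mpos q hq #|[set: 'I_k]%SET| [set: 'I_k]%SET erefl
   (finset.set0 : {set 'I_k}) _ n.+1.
case => [i _|C [Cp [_ [Cs hK]]]]; first by rewrite finset.in_set0.
exists C.
have Cp' : forall A, 0 < C A by move=> A; apply: Cp; exact: finset.subsetT.
split.
  move=> A; rewrite Cp' /=.
  have i0 : 'I_k := Ordinal hk.
  have hne : ~: A != A.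
    apply/eqP => E; have := finset.in_setC i0 A; rewrite E.
    by case: (i0 \in A).
  move: Cs; rewrite (bigD1 A) //= (bigD1 (~: A)) //=.
  have : 0 <= \sum_(i | (i != A) && (i != ~: A)) C i by apply: sumr_ge0 => i _; exact: ltW.
  have := Cp' (~: A).
  lra.
split; first exact: Cs.
move=> x y.
have [hs hrep] := hK x.
have E := kerp_unique (@FF_sym R _ k a Mr _ _) (@FF_lin R _ Llin k a Mr _ _) hP hs hrep.
have -> : ker_poly P n x y = (kerp P n.+1 x).[y] by rewrite kerp_eval.
rewrite -E Kc_eval; apply: eq_bigr => A _.
rewrite finset.setU0 /piP !horner_prod -big_split /=.
congr (_ * _ * _).
  by apply: eq_bigr => i _; rewrite !hornerXsubC.
rewrite /kernel_shift; case: leqP => hA.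
  by rewrite subSn // kerp_eval.
have -> : (n.+1 - #|A| = 0)%N by apply/eqP; rewrite subn_eq0.
by rewrite /kerp big_ord0 horner0.
Qed.
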